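(* Let $R=k[x_1,\dots,x_n]$ with the standard grading, let $G$ be a group acting on $R$ by permuting the variables, and let $I\subset R$ be a homogeneous ideal. Assume that every monomial initial ideal of $I$ is generated in degrees $\le d$. If $G$ acts monomially on $I$ up to degree $d$, then the action of $G$ on weight vectors induces automorphisms of the Gröbner fan of $I$: for each $g\in G$, the map $w\mapsto g(w)$ sends each equivalence class $C[w]$ onto an equivalence class $C[w']$, hence maps the Gröbner fan of $I$ onto itself.
   Context: For $h\in R$, $\mathrm{mon}(h)$ is the set of monomials appearing in $h$ with nonzero coefficient. $G$ acts monomially on $I$ up to degree $d$ if for every $h\in I$ of degree $\le d$ and every $g\in G$ there is $h'\in I$ with $\mathrm{mon}(h')=\mathrm{mon}(g(h))$. Writing $g(x_i)=x_{g(i)}$, for $w=(w_1,\dots,w_n)\in\mathbb{R}^n$ set $g(w)=(w_{g(1)},\dots,w_{g(n)})$. For $w\in\mathbb{R}^n$, $\mathrm{in}_w(I)$ is the ideal generated by the $w$-initial forms of elements of $I$, $C[w]=\{w'\in\mathbb{R}^n:\mathrm{in}_{w'}(I)=\mathrm{in}_w(I)\}$, and the Gröbner fan of $I$ is the fan formed by the closures of the sets $C[w]$. *)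

(* Defs.v *)
From HB Require Import structures.
From mathcomp Require Import all_boot all_order all_algebra all_fingroup.
From mathcomp Require Import reals.
From mathcomp Require Import mpoly.

Set Implicit Arguments.
Unset Strict Implicit.
Unset Printing Implicit Defensive.

Import Order.TTheory GRing.Theory Num.Theory.
Local Open Scope ring_scope.

Section GroebnerDefs.
Variables (n : nat) (k : fieldType) (R : realType).

Local Notation poly := {mpoly k[n]}.
Local Notation mono := 'X_{1..n}.

Definition is_ideal (I : poly -> Prop) : Prop :=
  [/\ I 0,
      (forall f g, I f -> I g -> I (f + g)) &
      (forall f h, I f -> I (h * f))].

Definition ideal_gen (S : poly -> Prop) (h : poly) : Prop :=
  exists l : seq (poly * poly),
    (forall x, x \in l -> S x.2) /\ h = \sum_(x <- l) x.1 * x.2.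

Definition same_ideal (J1 J2 : poly -> Prop) : Prop :=
  forall h, J1 h <-> J2 h.

Definition deg_le (h : poly) (d : nat) : Prop :=
  forall m, m \in msupp h -> (mdeg m <= d)%N.

Definition hcomp (e : nat) (h : poly) : poly :=
  \sum_(m <- msupp h | mdeg m == e) h@_m *: 'X_[m].

Definition homogeneous_ideal (I : poly -> Prop) : Prop :=
  is_ideal I /\ forall h e, I h -> I (hcomp e h).

Definition generated_in_deg_le (J : poly -> Prop) (d : nat) : Prop :=
  same_ideal J (ideal_gen (fun p => J p /\ deg_le p d)).

Definition term_order (le : rel mono) : Prop :=
  [/\ reflexive le, antisymmetric le, transitive le & total le] /\
  (forall m, le 0%MM m) /\
  (forall m1 m2 m, le m1 m2 -> le (m1 + m)%MM (m2 + m)%MM).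

Definition lead_mon (le : rel mono) (f : poly) (m : mono) : Prop :=
  m \in msupp f /\ forall m', m' \in msupp f -> le m' m.

Definition in_order (le : rel mono) (I : poly -> Prop) : poly -> Prop :=
  ideal_gen (fun p => exists f m, [/\ I f, f != 0, lead_mon le f m & p = 'X_[m]]).

Definition pact (g : {perm 'I_n}) (h : poly) : poly :=
  h \mPo [tuple ('X_(g i) : poly) | i < n].

Definition wact (g : {perm 'I_n}) (w : 'I_n -> R) : 'I_n -> R :=
  fun i => w (g i).

Definition acts_monomially (G : {set {perm 'I_n}}) (I : poly -> Prop) (d : nat)
  : Prop :=
  forall h g, I h -> deg_le h d -> g \in G ->
    exists h', I h' /\ msupp h' =i msupp (pact g h).

Definition wdeg (w : 'I_n -> R) (m : mono) : R := \sum_(i < n) w i * (m i)%:R.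

Definition in_w (w : 'I_n -> R) (f : poly) : poly :=
  \sum_(m <- msupp f | all (fun m' => wdeg w m' <= wdeg w m) (msupp f))
     f@_m *: 'X_[m].

Definition init_ideal (w : 'I_n -> R) (I : poly -> Prop) : poly -> Prop :=
  ideal_gen (fun p => exists f, I f /\ p = in_w w f).

Definition Cw (I : poly -> Prop) (w : 'I_n -> R) (w' : 'I_n -> R) : Prop :=
  same_ideal (init_ideal w' I) (init_ideal w I).

Definition closure_Rn (S : ('I_n -> R) -> Prop) (v : 'I_n -> R) : Prop :=
  forall e : R, 0 < e -> exists u, S u /\ forall i, `|u i - v i| < e.

Definition gfan_cone (I : poly -> Prop) (w : 'I_n -> R) : ('I_n -> R) -> Prop :=
  closure_Rn (Cw I w).

Definition wimage (g : {perm 'I_n}) (S : ('I_n -> R) -> Prop) : ('I_n -> R) -> Prop :=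
  fun v => exists u, S u /\ v = wact g u.

Definition same_wset (S1 S2 : ('I_n -> R) -> Prop) : Prop :=
  forall v, S1 v <-> S2 v.

End GroebnerDefs.

(* Main.v *)
Require Import Defs.
From HB Require Import structures.
From mathcomp Require Import all_boot all_order all_algebra all_fingroup.
From mathcomp Require Import reals.
From mathcomp Require Import mpoly.
From mathcomp Require Import zify.
From Stdlib Require Import Classical FunctionalExtensionality.

Set Implicit Arguments.
Unset Strict Implicit.
Unset Printing Implicit Defensive.

Import Order.TTheory GRing.Theory Num.Theory.

Section Basic.
Local Open Scope ring_scope.
Variables (n : nat) (k : fieldType).
Local Notation poly := {mpoly k[n]}.
Local Notation mono := 'X_{1..n}.
Implicit Types (p q : poly) (m a : mono) (P Q : pred mono).

Definition restr (P : pred mono) (p : poly) : poly :=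
  \sum_(m <- msupp p | P m) p@_m *: 'X_[m].

Lemma mcoeff_restr P p m : (restr P p)@_m = if P m then p@_m else 0.
Proof.
rewrite /restr raddf_sum /= big_mkcond /=.
have [mp|mp] := boolP (m \in msupp p).
  rewrite (bigD1_seq m) ?msupp_uniq //=.
  rewrite big1 ?addr0; last first.
    by move=> i /negbTE ine; case: (P i); rewrite ?mcoeffZ ?mcoeffX ?ine ?mulr0 ?mcoeff0.
  by case: (P m); rewrite ?mcoeffZ ?mcoeffX ?eqxx ?mulr1 ?mcoeff0.
rewrite big1; last first.
  move=> i _; case: (P i); rewrite ?mcoeffZ ?mcoeffX ?mcoeff0 //.
  case: eqP => [e|]; last by rewrite mulr0.
  by subst; move: mp; rewrite mcoeff_msupp negbK => /eqP ->; rewrite mul0r.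
move: mp; rewrite mcoeff_msupp negbK => /eqP ->; by case: (P m).
Qed.

Lemma msupp_restr P p m : (m \in msupp (restr P p)) = P m && (m \in msupp p).
Proof. by rewrite !mcoeff_msupp mcoeff_restr; case: (P m); rewrite ?eqxx. Qed.

Lemma restr_ext P Q p : {in msupp p, P =1 Q} -> restr P p = restr Q p.
Proof.
move=> H; apply/mpolyP => m; rewrite !mcoeff_restr.
have [mp|mp] := boolP (m \in msupp p); first by rewrite H.
move: mp; rewrite mcoeff_msupp negbK => /eqP ->; by case: (P m); case: (Q m).
Qed.

Lemma restrD P p q : restr P (p + q) = restr P p + restr P q.
Proof. by apply/mpolyP => m; rewrite mcoeffD !mcoeff_restr mcoeffD; case: (P m); rewrite ?addr0. Qed.

Lemma restrZ P c p : restr P (c *: p) = c *: restr P p.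
Proof. by apply/mpolyP => m; rewrite mcoeffZ !mcoeff_restr mcoeffZ; case: (P m); rewrite ?mulr0. Qed.

Lemma restrB P p q : restr P (p - q) = restr P p - restr P q.
Proof. by apply/mpolyP => m; rewrite mcoeffB !mcoeff_restr mcoeffB; case: (P m); rewrite ?subr0. Qed.

Lemma restr0 P : restr P 0 = 0.
Proof. by apply/mpolyP => m; rewrite mcoeff_restr mcoeff0; case: (P m). Qed.

Lemma restr_restr P Q p : restr P (restr Q p) = restr (predI P Q) p.
Proof. by apply/mpolyP => m; rewrite !mcoeff_restr /=; case: (P m); case: (Q m). Qed.

Lemma restr_false P p : (forall m, m \in msupp p -> ~~ P m) -> restr P p = 0.
Proof.
move=> H; apply/mpolyP => m; rewrite mcoeff_restr mcoeff0.
have [mp|mp] := boolP (m \in msupp p); first by rewrite (negbTE (H _ mp)).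
by move: mp; rewrite mcoeff_msupp negbK => /eqP ->; case: (P m).
Qed.

Lemma mcoeffXM a q m :
  ('X_[a] * q)@_m = if (a <= m)%MM then q@_(m - a)%MM else 0.
Proof.
case: ifP => am.
  by rewrite mulrC -{1}(submK am) addmC mcoeffMX.
apply/eqP; rewrite -[_ == 0]negbK -mcoeff_msupp; apply/negP => /msuppM_le.
move=> /allpairsP [[m1 m2]] /= [h1 _ hm]; move: h1; rewrite msuppX mem_seq1 => /eqP e.
by subst; rewrite lem_addr in am.
Qed.

Lemma restr_XM P a q :
  restr P ('X_[a] * q) = 'X_[a] * restr (fun m => P (a + m)%MM) q.
Proof.
apply/mpolyP => m; rewrite mcoeff_restr !mcoeffXM mcoeff_restr.
case am: (a <= m)%MM; last by case: (P m).
by rewrite [(a + _)%MM]addmC submK.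
Qed.

Lemma msupp_XM a q m : m \in msupp ('X_[a] * q) ->
  exists2 m', m' \in msupp q & m = (a + m')%MM.
Proof.
rewrite mcoeff_msupp mcoeffXM; case: ifP => am; last by rewrite eqxx.
by rewrite -mcoeff_msupp => H; exists (m - a)%MM => //; rewrite addmC submK.
Qed.

Lemma msupp_XM' a q m : m \in msupp q -> (a + m)%MM \in msupp ('X_[a] * q).
Proof. by rewrite !mcoeff_msupp mcoeffXM lem_addr addmC addmK. Qed.

Lemma msuppD_sub p q m : m \in msupp (p + q) -> (m \in msupp p) || (m \in msupp q).
Proof.
rewrite !mcoeff_msupp mcoeffD; case: (eqVneq p@_m 0) => [->|] //=.
by rewrite add0r.
Qed.

Lemma msuppB_sub p q m : m \in msupp (p - q) -> (m \in msupp p) || (m \in msupp q).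
Proof.
rewrite !mcoeff_msupp mcoeffB; case: (eqVneq p@_m 0) => [->|] //=.
by rewrite sub0r oppr_eq0.
Qed.

Lemma msuppZ_sub c p m : m \in msupp (c *: p) -> m \in msupp p.
Proof. by rewrite !mcoeff_msupp mcoeffZ; apply: contra => /eqP ->; rewrite mulr0. Qed.

Lemma msuppM_nz (x y : poly) m : (x * y)@_m != 0 -> exists2 m1, m1 \in msupp y & (m1 <= m)%MM.
Proof.
rewrite -mcoeff_msupp => /msuppM_le /allpairsP [[m1 m2]] /= [_ h2 ->].
by exists m2 => //; rewrite lem_addl.
Qed.

Lemma sum_nz (T : eqType) (s : seq T) (F : T -> k) :
  \sum_(x <- s) F x != 0 -> exists2 x, x \in s & F x != 0.
Proof.
elim: s => [|x s IH]; first by rewrite big_nil eqxx.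
rewrite big_cons; case: (eqVneq (F x) 0) => [Fx|Fx] nz; last by exists x; rewrite ?mem_head.
rewrite Fx add0r in nz; have [y ys Fy] := IH nz; by exists y => //; rewrite in_cons ys orbT.
Qed.


Section Ideals.
Variable J : poly -> Prop.
Hypothesis HJ : is_ideal J.

Lemma id0 : J 0. Proof. by case: HJ. Qed.
Lemma idD p q : J p -> J q -> J (p + q). Proof. by case: HJ => _ H _; apply: H. Qed.
Lemma idM h p : J p -> J (h * p). Proof. by case: HJ => _ _ H; apply: H. Qed.
Lemma idZ c p : J p -> J (c *: p). Proof. by rewrite -mul_mpolyC; apply: idM. Qed.
Lemma idN p : J p -> J (- p). Proof. by move=> Jp; rewrite -scaleN1r; apply: idZ. Qed.
Lemma idB p q : J p -> J q -> J (p - q). Proof. by move=> Jp Jq; apply: idD => //; apply: idN. Qed.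
Lemma idsum_in (T : eqType) (s : seq T) (F : T -> poly) :
  (forall x, x \in s -> J (F x)) -> J (\sum_(x <- s) F x).
Proof.
elim: s => [|x s IH] H; first by rewrite big_nil; apply: id0.
rewrite big_cons; apply: idD; first by apply: H; rewrite mem_head.
by apply: IH => y ys; apply: H; rewrite in_cons ys orbT.
Qed.
End Ideals.

Lemma ideal_gen_ideal (S : poly -> Prop) : is_ideal (ideal_gen S).
Proof.
split.
- by exists [::]; rewrite big_nil.
- move=> f g [l1 [H1 ->]] [l2 [H2 ->]]; exists (l1 ++ l2); split; last by rewrite big_cat.
  by move=> x; rewrite mem_cat => /orP[]; [apply: H1|apply: H2].
- move=> f h [l [H ->]]; exists [seq (h * x.1, x.2) | x <- l]; split.
    by move=> x /mapP [y yl ->]; exact: H yl.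
  by rewrite big_map mulr_sumr; apply: eq_bigr => x _; rewrite mulrA.
Qed.

Lemma ideal_gen_gen (S : poly -> Prop) p : S p -> ideal_gen S p.
Proof. by move=> Sp; exists [:: (1, p)]; split; [move=> x; rewrite mem_seq1 => /eqP ->|rewrite big_seq1 mul1r]. Qed.

Lemma ideal_gen_min (S J : poly -> Prop) : is_ideal J -> (forall p, S p -> J p) ->
  forall h, ideal_gen S h -> J h.
Proof.
move=> HJ HS h [l [Hl ->]]; elim: l Hl => [|x l IH] Hl; first by rewrite big_nil; apply: id0.
rewrite big_cons; apply: idD => //; last by apply: IH => y yl; apply: Hl; rewrite in_cons yl orbT.
by apply: idM => //; apply: HS; apply: Hl; rewrite mem_head.
Qed.

End Basic.

Section Orders.
Local Open Scope ring_scope.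
Variables (n : nat) (R : realType).
Local Notation mono := 'X_{1..n}.
Implicit Types (m a b c : mono) (w : 'I_n -> R).

Lemma wdegD w m1 m2 : wdeg w (m1 + m2)%MM = wdeg w m1 + wdeg w m2.
Proof. by rewrite /wdeg -big_split; apply: eq_bigr => i _; rewrite mnmDE natrD mulrDr. Qed.

Lemma wdeg0 w : wdeg w 0%MM = 0.
Proof. by rewrite /wdeg big1 // => i _; rewrite mnm0E mulr0. Qed.

Definition lew w : rel mono := fun m1 m2 =>
  (mdeg m1 < mdeg m2)%N || ((mdeg m1 == mdeg m2) &&
    ((wdeg w m1 < wdeg w m2) || ((wdeg w m1 == wdeg w m2) && (m1 <= m2)%O))).

Lemma lew_trans w : transitive (lew w).
Proof.
move=> b a c; rewrite /lew.
case: (ltngtP (mdeg a) (mdeg b)) => ab; case: (ltngtP (mdeg b) (mdeg c)) => bc //=.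
all: try by rewrite (ltn_trans ab bc).
all: try by rewrite -bc ab.
all: try by rewrite ab.
  by rewrite ab bc.
rewrite ab bc eqxx ltnn /=.
case: (ltgtP (wdeg w a) (wdeg w b)) => wab; case: (ltgtP (wdeg w b) (wdeg w c)) => wbc //=.
all: try by rewrite (lt_trans wab wbc).
all: try by rewrite -wbc wab.
all: try by rewrite wab.
  by rewrite wab wbc.
by rewrite wab wbc eqxx ltxx /=; apply: le_trans.
Qed.


Lemma lew_term w : term_order (lew w).
Proof.
split; [split|split].
- by move=> x; rewrite /lew ltnn !eqxx ltxx lexx orbT.
- move=> x y /andP[]; rewrite /lew.
  case: (ltngtP (mdeg x) (mdeg y)) => //= dxy.
  case: (ltgtP (wdeg w x) (wdeg w y)) => //= wxy xy yx.
  by apply: le_anti; rewrite xy yx.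
- exact: lew_trans.
- move=> x y; rewrite /lew.
  case: (ltngtP (mdeg x) (mdeg y)) => //= dxy.
  case: (ltgtP (wdeg w x) (wdeg w y)) => //= wxy.
  exact: le_total.
- move=> m; rewrite /lew mdeg0.
  case: (posnP (mdeg m)) => [/eqP|pos]; last by apply/orP; left.
  rewrite mdeg_eq0 => /eqP ->; rewrite wdeg0 mdeg0 !eqxx ltxx lexx; done.
- move=> x y m; rewrite /lew !mdegD !wdegD ltn_add2r eqn_add2r ltrD2r (inj_eq (addIr _)).
  case/orP => [->//|/andP[-> /orP[->|/andP[-> hle]]]]; first by rewrite /= !orbT.
  by rewrite (lem_add hle (lexx m)) !orbT.
Qed.

End Orders.

Section WF.
Variables (n : nat).
Local Notation mono := 'X_{1..n}.
Variable le : rel mono.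
Hypothesis Htotal : total le.
Hypothesis Htrans : transitive le.
Hypothesis Hanti : antisymmetric le.

Lemma le_refl' : reflexive le.
Proof. by move=> x; have := Htotal x x; rewrite orbb. Qed.

Lemma seq_max (s : seq mono) (P : mono -> Prop) :
  (exists x, x \in s /\ P x) ->
  exists x, [/\ x \in s, P x & forall y, y \in s -> P y -> le y x].
Proof.
elim: s => [[x [] //]|a s IH] Hex.
have [[x [xs Px]]|nex] := classic (exists x, x \in s /\ P x).
  have [y [ys Py ymax]] := IH (ex_intro _ x (conj xs Px)).
  have [Pa|nPa] := classic (P a).
    case/orP: (Htotal a y) => ay.
      exists y; split => //; first by rewrite in_cons ys orbT.
      by move=> z; rewrite in_cons => /orP[/eqP->//|zs]; apply: ymax.
    exists a; split => //; first by rewrite mem_head.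
    move=> z; rewrite in_cons => /orP[/eqP->|zs Pz]; first by rewrite le_refl'.
    by apply: Htrans (ymax _ zs Pz) ay.
  exists y; split => //; first by rewrite in_cons ys orbT.
  by move=> z; rewrite in_cons => /orP[/eqP->//|zs]; apply: ymax.
have Pa : P a.
  case: Hex => x [] /[!in_cons] /orP[/eqP->//|xs Px].
  by case: nex; exists x.
exists a; split => //; first by rewrite mem_head.
move=> z; rewrite in_cons => /orP[/eqP->|zs Pz]; first by rewrite le_refl'.
by case: nex; exists z.
Qed.

Lemma deg_ind e (P : mono -> Prop) :
  (forall m, mdeg m = e -> (forall m', mdeg m' = e -> le m' m -> m' != m -> P m') -> P m) ->
  forall m, mdeg m = e -> P m.
Proof.
move=> H.
pose A m := [set x : 'X_{1..n < e.+1} | le (val x) m && (val x != m)].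
suff: forall N m, mdeg m = e -> (#|A m| <= N)%N -> P m.
  by move=> S m dm; apply: (S #|A m|).
elim=> [|N IH] m dm cm; apply: H => // m' dm' lm' nm'.
  have dm'' : (mdeg m' < e.+1)%N by rewrite dm'.
  have : BMultinom dm'' \in A m by rewrite inE /= lm' nm'.
  by move: cm; rewrite leqn0 => /eqP/cards0_eq ->; rewrite inE.
apply: IH => //.
have dm'' : (mdeg m' < e.+1)%N by rewrite dm'.
rewrite -ltnS; apply: leq_trans cm; apply: proper_card; apply/properP; split.
  apply/subsetP => x; rewrite !inE => /andP[xm' xn].
  rewrite (Htrans xm' lm') /=; apply: contraNneq nm' => exm.
  by apply/eqP; apply: Hanti; rewrite lm' -exm xm'.
exists (BMultinom dm''); first by rewrite inE /= lm' nm'.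
by rewrite inE /= eqxx andbF.
Qed.

End WF.



Section LeadFacts.
Local Open Scope ring_scope.
Variables (n : nat) (k : fieldType) (R : realType).
Local Notation poly := {mpoly k[n]}.
Local Notation mono := 'X_{1..n}.
Implicit Types (p q F G : poly) (m a : mono) (u w : 'I_n -> R).

Definition hom e F := forall m, m \in msupp F -> mdeg m = e.
Definition wrestr u (g : R) F := restr (fun m => wdeg u m == g) F.

Lemma lew_refl u : reflexive (lew u). Proof. by case: (lew_term u) => [[]]. Qed.
Lemma lew_anti u : antisymmetric (lew u). Proof. by case: (lew_term u) => [[]]. Qed.
Lemma lew_trans' u : transitive (lew u). Proof. by case: (lew_term u) => [[]]. Qed.
Lemma lew_total u : total (lew u). Proof. by case: (lew_term u) => [[]]. Qed.
Lemma lew_add u x y m : lew u x y -> lew u (x + m)%MM (y + m)%MM.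
Proof. by case: (lew_term u) => _ [_]; apply. Qed.

Lemma lew_same u x y : mdeg x = mdeg y ->
  lew u x y = (wdeg u x < wdeg u y) || (wdeg u x == wdeg u y) && (x <= y)%O.
Proof. by move=> e; rewrite /lew e ltnn eqxx. Qed.

Lemma lew_wdeg u x y : mdeg x = mdeg y -> lew u x y -> wdeg u x <= wdeg u y.
Proof. by move=> e; rewrite lew_same // => /orP[/ltW//|/andP[/eqP-> _]]. Qed.

Lemma msupp_nz p : p != 0 -> exists m, m \in msupp p.
Proof.
move=> nz; case E: (msupp p) => [|m s]; first by move: nz; rewrite -msupp_eq0 E.
by exists m; rewrite mem_head.
Qed.

Lemma lead_exists (le : rel mono) p : total le -> transitive le -> p != 0 ->
  exists m, lead_mon le p m.
Proof.
move=> tot tr nz; have [m mp] := msupp_nz nz.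
have [x [xs _ xm]] := seq_max tot tr (P := fun _ => True) (ex_intro _ m (conj mp I)).
by exists x; split => // y ys; apply: xm.
Qed.

Lemma in_wE w (f : poly) : in_w w f = restr (fun m => all (fun m' => wdeg w m' <= wdeg w m) (msupp f)) f.
Proof. by []. Qed.

Lemma in_w_lead u e F m : hom e F -> lead_mon (lew u) F m ->
  in_w u F = wrestr u (wdeg u m) F.
Proof.
move=> hF [mF lF]; rewrite in_wE /wrestr; apply: restr_ext => x xF.
have dx : mdeg x = mdeg m by rewrite (hF _ xF) (hF _ mF).
apply/allP/eqP => [H|->].
  by apply/le_anti; rewrite (lew_wdeg dx (lF _ xF)) (H _ mF).
by move=> y yF; apply: lew_wdeg; [rewrite (hF _ yF) (hF _ mF)|apply: lF].
Qed.

Lemma wrestr_lead u e F m : hom e F -> lead_mon (lew u) F m ->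
  lead_mon (fun a b => (a <= b)%O) (wrestr u (wdeg u m) F) m.
Proof.
move=> hF [mF lF]; split; first by rewrite msupp_restr eqxx mF.
move=> y; rewrite msupp_restr => /andP[/eqP wy yF].
have dy : mdeg y = mdeg m by rewrite (hF _ yF) (hF _ mF).
by move: (lF _ yF); rewrite lew_same // wy ltxx eqxx.
Qed.

Lemma lead_of_wrestr u e F m g : hom e F -> (forall x, x \in msupp F -> wdeg u x <= g) ->
  lead_mon (fun a b => (a <= b)%O) (wrestr u g F) m -> lead_mon (lew u) F m.
Proof.
move=> hF wF [mF lF]; move: (mF); rewrite msupp_restr => /andP[/eqP wm mF'].
split => // y yF; have dy : mdeg y = mdeg m by rewrite (hF _ yF) (hF _ mF').
rewrite lew_same // wm; have := wF _ yF; rewrite le_eqVlt => /orP[/eqP wy|->//].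
by rewrite wy eqxx ltxx lF // /wrestr msupp_restr wy eqxx yF.
Qed.

Lemma hcompE e (f : poly) : hcomp e f = restr (fun m => mdeg m == e) f.
Proof. by []. Qed.

Lemma hcomp_lead u F m : lead_mon (lew u) F m ->
  hom (mdeg m) (hcomp (mdeg m) F) /\ lead_mon (lew u) (hcomp (mdeg m) F) m.
Proof.
move=> [mF lF]; split.
  by move=> x; rewrite hcompE msupp_restr => /andP[/eqP].
split; first by rewrite hcompE msupp_restr eqxx.
by move=> y; rewrite hcompE msupp_restr => /andP[_ /lF].
Qed.

Lemma lead_supp (le : rel mono) F F' m : msupp F =i msupp F' ->
  lead_mon le F m -> lead_mon le F' m.
Proof. by move=> E [mF lF]; split; [rewrite -E|move=> y; rewrite -E; apply: lF]. Qed.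

Lemma homog_supp e F F' : msupp F =i msupp F' -> hom e F -> hom e F'.
Proof. by move=> E hF x; rewrite -E; apply: hF. Qed.

Lemma in_w_supp u w F F' : msupp F =i msupp F' -> in_w u F = in_w w F -> in_w u F' = in_w w F'.
Proof.
move=> E H; rewrite !in_wE; apply: restr_ext => x xF' /=.
have E' : msupp F' =i msupp F by move=> y; rewrite E.
rewrite !(eq_all_r E').
move/mpolyP/(_ x): H; rewrite !in_wE !mcoeff_restr.
move: xF'; rewrite -E mcoeff_msupp.
by case: (all _ _); case: (all _ _) => // nz e; move: nz; rewrite e eqxx.
Qed.

End LeadFacts.

Section Good.
Local Open Scope ring_scope.
Variables (n : nat) (k : fieldType) (R : realType).
Local Notation poly := {mpoly k[n]}.
Local Notation mono := 'X_{1..n}.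
Implicit Types (p q f h F G : poly) (m a : mono) (u v w : 'I_n -> R).
Variable J : poly -> Prop.
Hypothesis HJ : homogeneous_ideal J.

Let HJi : is_ideal J. Proof. by case: HJ. Qed.
Let HJh e h : J h -> J (hcomp e h). Proof. by case: HJ => _; apply. Qed.

Definition qres v (g : R) e p := restr (fun m => (wdeg v m == g) && (mdeg m == e)) p.

Definition Good v p := forall g e, exists F, [/\ J F, hom e F,
  (forall m, m \in msupp F -> wdeg v m <= g) & wrestr v g F = qres v g e p].

Lemma addr_eq_sub (x y z : R) : (x + y == z) = (y == z - x).
Proof. by rewrite [RHS]eq_sym subr_eq eq_sym addrC. Qed.

Lemma Good0 v : Good v 0.
Proof.
move=> g e; exists 0; split.
- exact: id0.
- by move=> m; rewrite msupp0.
- by move=> m; rewrite msupp0.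
- by rewrite /wrestr /qres !restr0.
Qed.

Lemma GoodD v p q : Good v p -> Good v q -> Good v (p + q).
Proof.
move=> Gp Gq g e; have [F1 [J1 h1 w1 e1]] := Gp g e; have [F2 [J2 h2 w2 e2]] := Gq g e.
exists (F1 + F2); split.
- exact: idD.
- by move=> m /msuppD_sub /orP[/h1|/h2].
- by move=> m /msuppD_sub /orP[/w1|/w2].
- by rewrite /wrestr restrD -[restr _ F1]/(wrestr v g F1) -[restr _ F2]/(wrestr v g F2) e1 e2 /qres restrD.
Qed.

Lemma GoodZ v c p : Good v p -> Good v (c *: p).
Proof.
move=> Gp g e; have [F1 [J1 h1 w1 e1]] := Gp g e.
exists (c *: F1); split.
- exact: idZ.
- by move=> m /msuppZ_sub /h1.
- by move=> m /msuppZ_sub /w1.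
- by rewrite /wrestr restrZ -[restr _ F1]/(wrestr v g F1) e1 /qres restrZ.
Qed.

Lemma GoodXM v a p : Good v p -> Good v ('X_[a] * p).
Proof.
move=> Gp g e.
case: (leqP (mdeg a) e) => ae.
  have [F1 [J1 h1 w1 e1]] := Gp (g - wdeg v a) (e - mdeg a)%N.
  exists ('X_[a] * F1); split.
  - exact: idM.
  - move=> m /msupp_XM [m' m'F ->]; rewrite mdegD (h1 _ m'F); lia.
  - move=> m /msupp_XM [m' m'F ->]; rewrite wdegD.
    by rewrite -lerBrDl; apply: w1.
  - rewrite /wrestr /qres !restr_XM; congr (_ * _).
    have -> : restr (fun m => wdeg v (a + m)%MM == g) F1 = wrestr v (g - wdeg v a) F1.
      by apply: restr_ext => m _; rewrite wdegD addr_eq_sub.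
    rewrite e1; apply: restr_ext => m _; rewrite wdegD mdegD addr_eq_sub; congr (_ && _).
    by apply/eqP/eqP => /= H; lia.
exists 0; split.
- exact: id0.
- by move=> m; rewrite msupp0.
- by move=> m; rewrite msupp0.
- rewrite /wrestr /qres restr0 restr_XM restr_false ?mulr0 // => m _; rewrite mdegD.
  by apply/negP => /andP[_ /eqP] H; lia.
Qed.

Lemma Goodsum v (T : Type) (s : seq T) (Fs : T -> poly) :
  (forall x, Good v (Fs x)) -> Good v (\sum_(x <- s) Fs x).
Proof.
move=> H; elim: s => [|x s IH]; first by rewrite big_nil; apply: Good0.
by rewrite big_cons; apply: GoodD.
Qed.

Lemma Good_ideal v : is_ideal (Good v).
Proof.
split; [exact: Good0|exact: GoodD|].
move=> f h Gf; rewrite (mpolyE h) big_distrl /=; apply: Goodsum => a.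
by rewrite -scalerAl; apply: GoodZ; apply: GoodXM.
Qed.

Lemma wdeg_max v f : f != 0 -> exists2 m0, m0 \in msupp f &
  forall m, m \in msupp f -> wdeg v m <= wdeg v m0.
Proof.
move=> nz; have [m mf] := msupp_nz nz.
have tot : total (fun a b : mono => wdeg v a <= wdeg v b) by move=> a b; apply: le_total.
have tr : transitive (fun a b : mono => wdeg v a <= wdeg v b) by move=> y x z; apply: le_trans.
have [m0 [m0f _ mx]] := seq_max tot tr (P := fun _ => True) (ex_intro _ m (conj mf I)).
by exists m0 => // y yf; apply: mx.
Qed.

Lemma Pall_max v f m0 : (forall m, m \in msupp f -> wdeg v m <= wdeg v m0) -> m0 \in msupp f ->
  forall m, m \in msupp f ->
  all (fun m' => wdeg v m' <= wdeg v m) (msupp f) = (wdeg v m == wdeg v m0).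
Proof.
move=> mx m0f m mf; apply/allP/eqP => [H|->]; last by move=> y yf; apply: mx.
by apply/le_anti; rewrite H ?mx.
Qed.

Lemma Good_in v f : J f -> Good v (in_w v f).
Proof.
move=> Jf g e.
case: (eqVneq f 0) => [->|nz].
  by rewrite in_wE restr0; apply: Good0.
have [m0 m0f mx] := wdeg_max v nz.
have Pall := Pall_max mx m0f.
case: (eqVneq g (wdeg v m0)) => [->|gne].
  exists (hcomp e f); split.
  - exact: HJh.
  - by move=> m; rewrite hcompE msupp_restr => /andP[/eqP].
  - by move=> m; rewrite hcompE msupp_restr => /andP[_ /mx].
  - rewrite /wrestr hcompE restr_restr in_wE /qres restr_restr; apply: restr_ext => m mf /=.
    by rewrite Pall //; case: (wdeg v m == _); case: (mdeg m == e).
exists 0; split.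
- exact: id0.
- by move=> m; rewrite msupp0.
- by move=> m; rewrite msupp0.
rewrite /wrestr restr0 /qres in_wE restr_restr restr_false // => m mf /=; rewrite Pall //.
by apply/negP => /andP[/andP[/eqP wg _] /eqP wm]; move: gne; rewrite -wg wm eqxx.
Qed.

Lemma Init_Good v p : init_ideal v J p -> Good v p.
Proof.
apply: ideal_gen_min; first exact: Good_ideal.
by move=> q [f [Jf ->]]; apply: Good_in.
Qed.

Definition Mset v m := exists F, [/\ J F, hom (mdeg m) F & lead_mon (lew v) F m].

Lemma LeadInit v p m : init_ideal v J p -> lead_mon (fun a b => (a <= b)%O) p m -> Mset v m.
Proof.
move=> Ip [mp lp]; have [F [JF hF wF eF]] := Init_Good Ip (wdeg v m) (mdeg m).
exists F; split => //; apply: (lead_of_wrestr hF wF); rewrite eF; split.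
  by rewrite /qres msupp_restr !eqxx mp.
by move=> y; rewrite /qres msupp_restr => /andP[_ /lp].
Qed.

End Good.

Section Core.
Local Open Scope ring_scope.
Variables (n : nat) (k : fieldType) (R : realType) (d : nat).
Local Notation poly := {mpoly k[n]}.
Local Notation mono := 'X_{1..n}.
Implicit Types (p q f h F G : poly) (m a : mono) (v : 'I_n -> R).

Definition DG (J : poly -> Prop) v := forall F m, J F -> lead_mon (lew v) F m ->
  exists F0 m0, [/\ J F0, lead_mon (lew v) F0 m0, (m0 <= m)%MM & (mdeg m0 <= d)%N].
Definition TR (J1 J2 : poly -> Prop) := forall f, J1 f -> deg_le f d ->
  exists f', J2 f' /\ msupp f' =i msupp f.

Variables (J J' : poly -> Prop) (u w : 'I_n -> R).
Hypotheses (HJ : homogeneous_ideal J) (HJ' : homogeneous_ideal J').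
Hypotheses (T1 : TR J J') (T2 : TR J' J) (HDG : DG J' u).
Hypothesis HI : same_ideal (init_ideal u J) (init_ideal w J).

Let HJi : is_ideal J. Proof. by case: HJ. Qed.
Let HJh e h : J h -> J (hcomp e h). Proof. by case: HJ => _; apply. Qed.
Let HJi' : is_ideal J'. Proof. by case: HJ'. Qed.
Let HJh' e h : J' h -> J' (hcomp e h). Proof. by case: HJ' => _; apply. Qed.
Let Ii v (K : poly -> Prop) : is_ideal (init_ideal v K). Proof. exact: ideal_gen_ideal. Qed.

Lemma C1 m : Mset J w m -> Mset J u m.
Proof.
case=> F [JF hF lF].
have Ip : init_ideal u J (in_w w F).
  by apply/HI; apply: ideal_gen_gen; exists F.
apply: (LeadInit HJ Ip); rewrite (in_w_lead hF lF); exact: wrestr_lead hF lF.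
Qed.

Definition reduced m0 G := [/\ J G, hom (mdeg m0) G, lead_mon (lew u) G m0 &
  forall m', m' \in msupp G -> m' != m0 -> ~ Mset J u m'].

Lemma RE m0 : Mset J u m0 -> exists G, reduced m0 G.
Proof.
case=> F0 [JF0 hF0 lF0].
set e := mdeg m0.
pose Q m1 := forall F, J F -> hom e F -> lead_mon (lew u) F m0 ->
    (forall m', m' \in msupp F -> m' != m0 -> Mset J u m' -> lew u m' m1 && (m' != m1)) ->
    exists G, reduced m0 G.
suff S : forall m1, mdeg m1 = e -> Q m1.
  apply: (S m0 erefl F0) => // m' m'F nm' _; rewrite nm'.
  by case: lF0 => _ /(_ _ m'F) ->.
move=> m1 dm1; apply: (deg_ind (@lew_trans' _ _ u) (@lew_anti _ _ u) (P := Q) _ dm1).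
move=> {}m1 {}dm1 IH F JF hF lF bad.
have [[x [xs [xn xM]]] | nobad] :=
  classic (exists x, x \in msupp F /\ (x != m0 /\ Mset J u x)).
  have [m2 [m2F [m2n m2M] m2max]] := seq_max (@lew_total _ _ u) (@lew_trans' _ _ u)
     (P := fun x => x != m0 /\ Mset J u x) (ex_intro _ x (conj xs (conj xn xM))).
  have /andP[l21 n21] := bad _ m2F m2n m2M.
  have d2 : mdeg m2 = e by apply: hF.
  have [F2 [JF2 hF2 lF2]] := m2M.
  case: (lF2) => m2F2 l2.
  have nz2 : F2@_m2 != 0 by rewrite -mcoeff_msupp.
  set c := F@_m2 / F2@_m2.
  have l20 : lew u m2 m0 by case: lF => _; apply.
  have m0F2 : F2@_m0 = 0.
    apply/eqP; rewrite -[_ == 0]negbK -mcoeff_msupp; apply/negP => /l2 l02.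
    by move: m2n; rewrite (@lew_anti _ _ u m2 m0) ?eqxx // l20 l02.
  apply: (IH m2 d2 l21 n21 (F - c *: F2)).
  - by apply: idB => //; apply: idZ.
  - move=> y /msuppB_sub /orP[/hF //|/msuppZ_sub yF2]; rewrite (hF2 _ yF2); exact: d2.
  - case: lF => m0F l0; split.
      rewrite mcoeff_msupp mcoeffB mcoeffZ m0F2 mulr0 subr0 -mcoeff_msupp //.
    move=> y /msuppB_sub /orP[/l0 //|/msuppZ_sub /l2 y2].
    exact: lew_trans' y2 l20.
  - move=> y yF' yn yM.
    have ym2 : y != m2.
      apply: contraTneq yF' => ->; rewrite mcoeff_msupp mcoeffB mcoeffZ /c.
      by rewrite mulfVK // subrr eqxx.
    rewrite ym2 andbT; move: yF' => /msuppB_sub /orP[yF|/msuppZ_sub /l2 //].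
    exact: m2max.
exists F; split => // m' m'F m'n m'M; apply: nobad; exists m'; split => //.
Qed.

Lemma C3 m0 G : reduced m0 G -> in_w u G = in_w w G.
Proof.
case=> JG hG lG red.
have nz : G != 0 by case: lG => mG _; apply: contraTneq mG => ->; rewrite msupp0.
have [m1 lG1] := lead_exists (@lew_total _ _ w) (@lew_trans' _ _ w) nz.
have d1 : mdeg m1 = mdeg m0 by case: lG1 => m1G _; apply: hG.
have M1 : Mset J u m1 by apply: C1; exists G; split => //; rewrite d1.
have e10 : m1 = m0.
  apply/eqP; apply: contraT => ne; exfalso; case: lG1 => m1G _; exact: (red m1 m1G ne M1).
rewrite e10 in lG1.
rewrite (in_w_lead hG lG) (in_w_lead hG lG1).
pose q := wrestr u (wdeg u m0) G - wrestr w (wdeg w m0) G.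
apply/eqP; rewrite -subr_eq0 -/q; apply: contraT => qnz.
have [m' lq] := lead_exists (le := fun a b => (a <= b)%O) le_total (fun y x z => @le_trans _ _ y x z) qnz.
have Iq : init_ideal u J q.
  apply: idB; first exact: Ii.
    by apply: ideal_gen_gen; exists G; split => //; rewrite (in_w_lead hG lG).
  by apply/HI; apply: ideal_gen_gen; exists G; split => //; rewrite (in_w_lead hG lG1).
have M' := LeadInit HJ Iq lq.
case: lq => m'q _.
have m'G : m' \in msupp G.
  by move: m'q => /msuppB_sub /orP[]; rewrite /wrestr msupp_restr => /andP[].
exfalso; apply: (red m' m'G) => //; apply: contraTneq m'q => ->.
rewrite mcoeff_msupp /q mcoeffB /wrestr !mcoeff_restr !eqxx subrr eqxx //.
Qed.

Lemma MD e m : mdeg m = e -> forall F, J' F -> hom e F -> lead_mon (lew u) F m ->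
  init_ideal w J' (wrestr u (wdeg u m) F).
Proof.
move=> dm.
pose Q m := forall F, J' F -> hom e F -> lead_mon (lew u) F m ->
  init_ideal w J' (wrestr u (wdeg u m) F).
apply: (deg_ind (@lew_trans' _ _ u) (@lew_anti _ _ u) (P := Q) _ dm).
move=> {}m {}dm IH F JF hF lF.
have [F0 [m0 [JF0 lF0 m0m dm0]]] := HDG JF lF.
have [hF0h lF0h] := hcomp_lead lF0.
have JF0h : J' (hcomp (mdeg m0) F0) by apply: HJh'.
have dlF0h : deg_le (hcomp (mdeg m0) F0) d by move=> x /hF0h ->.
have [f1 [Jf1 sf1]] := T2 JF0h dlF0h.
have sf1' : msupp (hcomp (mdeg m0) F0) =i msupp f1 by move=> x; rewrite sf1.
have M0 : Mset J u m0.
  by exists f1; split => //; [exact: homog_supp sf1' hF0h | exact: lead_supp sf1' lF0h].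
have [G RG] := RE M0.
have eG := C3 RG.
case: RG => JG hG lG _.
have dlG : deg_le G d by move=> x /hG ->.
have [G' [JG' sG']] := T1 JG dlG.
have sG'' : msupp G =i msupp G' by move=> x; rewrite sG'.
have eG' := in_w_supp sG'' eG.
have hG' := homog_supp sG'' hG.
have lG' := lead_supp sG'' lG.
have IG' : init_ideal w J' (wrestr u (wdeg u m0) G').
  rewrite -(in_w_lead hG' lG') eG'; apply: ideal_gen_gen; by exists G'.
pose a := (m - m0)%MM.
have ma : m = (a + m0)%MM by rewrite /a submK.
pose c := F@_m / G'@_m0.
have nzG' : G'@_m0 != 0 by case: lG' => /[!mcoeff_msupp].
pose H := c *: ('X_[a] * G').
have XG : ('X_[a] * G')@_m = G'@_m0.
  by rewrite ma mcoeffXM lem_addr [(a + m0)%MM]addmC addmK.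
have suppH x : x \in msupp H -> exists2 x', x' \in msupp G' & x = (a + x')%MM.
  by move/msuppZ_sub/msupp_XM.
have -> : F = (F - H) + H by rewrite subrK.
rewrite /wrestr restrD; apply: idD; first exact: Ii; last first.
  rewrite /H restrZ restr_XM; apply: idZ; first exact: Ii.
  apply: idM; first exact: Ii.
  have -> : restr (fun x => wdeg u (a + x)%MM == wdeg u m) G' = wrestr u (wdeg u m0) G'.
    by apply: restr_ext => x _; rewrite ma !wdegD (inj_eq (addrI _)).
  exact: IG'.
pose F2 := F - H.
have JF2 : J' F2 by apply: idB => //; apply: idZ => //; apply: idM.
have hF2 : hom e F2.
  move=> x /msuppB_sub /orP[/hF //|/suppH [x' x'G ->]].
  by rewrite mdegD (hG' _ x'G) -mdegD -ma.
have lF2m : forall x, x \in msupp F2 -> lew u x m.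
  move=> x /msuppB_sub /orP[|/suppH [x' x'G ->]]; first by case: lF => _; apply.
  case: lG' => _ /(_ _ x'G) l; rewrite ma addmC [(a + m0)%MM]addmC; exact: lew_add.
have F2m : F2@_m = 0.
  by rewrite /F2 /H mcoeffB mcoeffZ XG /c divfK // subrr.
rewrite -/F2; case: (eqVneq F2 0) => [->|nz2]; first by rewrite restr0; apply: id0; apply: Ii.
have [m2 lF2] := lead_exists (@lew_total _ _ u) (@lew_trans' _ _ u) nz2.
have m2F2 : m2 \in msupp F2 by case: lF2.
have d2 : mdeg m2 = e := hF2 _ m2F2.
have l2m := lF2m _ m2F2.
have n2m : m2 != m by apply: contraTneq m2F2 => ->; rewrite mcoeff_msupp F2m eqxx.
case: (eqVneq (wdeg u m2) (wdeg u m)) => [ew|nw].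
  by have := IH m2 d2 l2m n2m F2 JF2 hF2 lF2; rewrite /wrestr ew.
rewrite restr_false; first by apply: id0; apply: Ii.
move=> x xF2; have lx : lew u x m2 by case: lF2 => _; apply.
have dx : mdeg x = mdeg m2 by rewrite (hF2 _ xF2) d2.
have h1 := lew_wdeg dx lx.
have h2 : wdeg u m2 < wdeg u m by rewrite lt_neqAle nw (lew_wdeg _ l2m) // d2 dm.
by rewrite lt_eqF // (le_lt_trans h1 h2).
Qed.

Lemma KeyGen e g F : J' F -> hom e F -> (forall x, x \in msupp F -> wdeg u x <= g) ->
  init_ideal w J' (wrestr u g F).
Proof.
move=> JF hF wF.
case: (eqVneq F 0) => [->|nz]; first by rewrite /wrestr restr0; apply: id0; apply: Ii.
have [m lF] := lead_exists (@lew_total _ _ u) (@lew_trans' _ _ u) nz.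
have mF : m \in msupp F by case: lF.
case: (eqVneq (wdeg u m) g) => [<-|nw]; first by apply: (MD (hF _ mF)).
rewrite /wrestr restr_false; first by apply: id0; apply: Ii.
move=> x xF; have lx : lew u x m by case: lF => _; apply.
have dx : mdeg x = mdeg m by rewrite (hF _ xF) (hF _ mF).
have h1 := lew_wdeg dx lx.
have h2 : wdeg u m < g by rewrite lt_neqAle nw wF.
by rewrite lt_eqF // (le_lt_trans h1 h2).
Qed.

Lemma core_incl p : init_ideal u J' p -> init_ideal w J' p.
Proof.
apply: ideal_gen_min; first exact: Ii.
move=> q [f [Jf ->]].
case: (eqVneq f 0) => [->|nz]; first by rewrite in_wE restr0; apply: id0; apply: Ii.
have [m0 m0f mx] := wdeg_max u nz.
have Pall := Pall_max mx m0f.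
have -> : in_w u f = \sum_(e < msize f) wrestr u (wdeg u m0) (hcomp e f).
  apply/mpolyP => x; rewrite in_wE mcoeff_restr raddf_sum /=.
  under eq_bigr do rewrite /wrestr mcoeff_restr hcompE mcoeff_restr.
  case: (boolP (x \in msupp f)) => xf.
    rewrite Pall // (bigD1 (Ordinal (msize_mdeg_lt xf))) //= eqxx big1 ?addr0.
      by case: (wdeg u x == _).
    move=> i /eqP ine; case: ifP => // _; case: ifP => // /eqP di; exfalso.
    by apply: ine; apply: val_inj => /=; rewrite di.
  move: xf; rewrite mcoeff_msupp negbK => /eqP ->.
  by rewrite big1 ?if_same // => i _; rewrite !if_same.
apply: idsum_in; first exact: Ii.
move=> e _; apply: (@KeyGen (nat_of_ord e) (wdeg u m0) (hcomp e f)).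
- exact: HJh'.
- by move=> x; rewrite hcompE msupp_restr => /andP[/eqP].
- by move=> x; rewrite hcompE msupp_restr => /andP[_ /mx].
Qed.
End Core.



Section Transport.
Local Open Scope ring_scope.
Variables (n : nat) (k : fieldType) (R : realType).
Local Notation poly := {mpoly k[n]}.
Local Notation mono := 'X_{1..n}.
Implicit Types (p q f h F G : poly) (m a : mono) (v : 'I_n -> R) (s : {perm 'I_n}).

Definition mp m s : mono := [multinom m (s i) | i < n].

Lemma mpK s m : mp (mp m s) (s^-1)%g = m.
Proof. exact: (mpermKV s). Qed.
Lemma mpKV s m : mp (mp m (s^-1)%g) s = m.
Proof. exact: (mpermK s). Qed.
Lemma mp_inj s : injective (mp^~ s).
Proof. exact: mperm_inj. Qed.
Lemma mdeg_mp s m : mdeg (mp m s) = mdeg m.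
Proof. exact: mdeg_mperm. Qed.
Lemma mpD s m1 m2 : mp (m1 + m2)%MM s = (mp m1 s + mp m2 s)%MM.
Proof. by apply/mnmP => i; rewrite /mp !(mnmE, mnmDE). Qed.
Lemma mp0 s : mp 0%MM s = 0%MM.
Proof. by apply/mnmP => i; rewrite /mp !mnmE. Qed.
Lemma mp_le s m1 m2 : (m1 <= m2)%MM -> (mp m1 s <= mp m2 s)%MM.
Proof. by move/mnm_lepP => H; apply/mnm_lepP => i; rewrite /mp !mnmE. Qed.

Lemma mcoeff_msym s p m : (msym s p)@_m = p@_(mp m s).
Proof. exact: mcoeff_sym. Qed.

Lemma msupp_msym s p m : (m \in msupp (msym s p)) = (mp m s \in msupp p).
Proof. by rewrite !mcoeff_msupp mcoeff_msym. Qed.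

Lemma pact_msym s h : pact s h = msym s h.
Proof.
rewrite /pact /comp_mpoly /msym /mmap; apply: eq_bigr => m _; congr (_ * _).
by rewrite /mmap1; apply: eq_bigr => i _; rewrite tnth_mktuple.
Qed.

Lemma msymKV s p : msym s (msym (s^-1)%g p) = p.
Proof. by rewrite -msymMm mulVg msym1m. Qed.
Lemma msymK s p : msym (s^-1)%g (msym s p) = p.
Proof. by rewrite -msymMm mulgV msym1m. Qed.

Lemma wdeg_mp s v m : wdeg (wact s v) (mp m s) = wdeg v m.
Proof.
rewrite /wdeg /wact (reindex_inj (h := (s^-1)%g) (@perm_inj _ _)) /=.
by apply: eq_bigr => i _; rewrite /mp mnmE permKV.
Qed.

Lemma msym_restr s P h : msym s (restr P h) = restr (fun m => P (mp m s)) (msym s h).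
Proof. by apply/mpolyP => m; rewrite mcoeff_msym !mcoeff_restr mcoeff_msym. Qed.

Lemma msym_hcomp s e h : msym s (hcomp e h) = hcomp e (msym s h).
Proof.
rewrite !hcompE msym_restr; apply: restr_ext => m _; by rewrite mdeg_mp.
Qed.

Lemma in_w_msym s v h : in_w v (msym s h) = msym s (in_w (wact s v) h).
Proof.
rewrite !in_wE msym_restr; apply: restr_ext => m _ /=.
apply/allP/allP => H x.
  move=> xh; have := H (mp x (s^-1)%g); rewrite msupp_msym mpKV => /(_ xh).
  by rewrite -(wdeg_mp s v (mp x (s^-1)%g)) mpKV wdeg_mp.
rewrite msupp_msym => xh; have := H _ xh.
by rewrite !wdeg_mp.
Qed.

Lemma msupp_msym_eq s p q : msupp p =i msupp q -> msupp (msym s p) =i msupp (msym s q).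
Proof. by move=> E m; rewrite !msupp_msym E. Qed.

Lemma deg_le_msym s h d : deg_le h d -> deg_le (msym s h) d.
Proof. by move=> H m; rewrite msupp_msym => /H; rewrite mdeg_mp. Qed.

End Transport.

Section Main.
Local Open Scope ring_scope.
Variables (n : nat) (k : fieldType) (R : realType) (d : nat).
Local Notation poly := {mpoly k[n]}.
Local Notation mono := 'X_{1..n}.
Implicit Types (p q f h F : poly) (m a : mono) (v : 'I_n -> R) (s : {perm 'I_n}).
Variables (G : {group {perm 'I_n}}) (I : poly -> Prop).
Hypothesis HI : homogeneous_ideal I.
Hypothesis HB : forall le : rel mono, term_order le -> generated_in_deg_le (in_order le I) d.
Hypothesis HM : acts_monomially G I d.

Let HIi : is_ideal I. Proof. by case: HI. Qed.
Let HIh e h : I h -> I (hcomp e h). Proof. by case: HI => _; apply. Qed.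

Definition Js s := fun h => I (msym s h).

Lemma Js_hom s : homogeneous_ideal (Js s).
Proof.
split; [split|].
- by rewrite /Js msym0; apply: id0.
- by move=> f g; rewrite /Js msymD; apply: idD.
- by move=> f g; rewrite /Js msymM; apply: idM.
- by move=> h e; rewrite /Js msym_hcomp; apply: HIh.
Qed.

Lemma TR1 s : s \in G -> TR d I (Js s).
Proof.
move=> sG f If df; have [h' [Ih' sh']] := HM If df sG.
exists (msym (s^-1)%g h'); split; first by rewrite /Js msymKV.
move=> m; rewrite (msupp_msym_eq _ sh') pact_msym.
by rewrite msupp_msym -msupp_msym msymK.
Qed.

Lemma TR2 s : (s^-1)%g \in G -> TR d (Js s) I.
Proof.
move=> sG f If df; have [h' [Ih' sh']] := HM If (deg_le_msym (s:=s) df) sG.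
exists h'; split => // m; rewrite sh' pact_msym msymK //.
Qed.

Lemma DG_gen (K : poly -> Prop) (le : rel mono) : term_order le ->
  generated_in_deg_le (in_order le K) d ->
  forall F m, K F -> lead_mon le F m ->
  exists F0 m0, [/\ K F0, lead_mon le F0 m0, (m0 <= m)%MM & (mdeg m0 <= d)%N].
Proof.
move=> _ Hg F m KF lF.
have Xm : in_order le K 'X_[m].
  apply: ideal_gen_gen; exists F, m; split => //.
  by case: lF => mF _; apply: contraTneq mF => ->; rewrite msupp0.
case: ((Hg _).1 Xm) => l [Hl El].
have : ('X_[m] : poly)@_m != 0 by rewrite mcoeffX eqxx oner_neq0.
rewrite El raddf_sum => /sum_nz [x xl nzx].
have [m1 m1x m1m] := msuppM_nz nzx.
case: (Hl x xl) => [[l' [Hl' El']] dlx].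
have : (x.2)@_m1 != 0 by rewrite -mcoeff_msupp.
rewrite El' raddf_sum => /sum_nz [y yl' nzy].
have [m2 m2y m2m1] := msuppM_nz nzy.
case: (Hl' y yl') => F0 [m0 [KF0 nz0 lF0 ey]].
move: m2y; rewrite ey msuppX mem_seq1 => /eqP e2; subst m2.
exists F0, m0; split => //; first exact: lepm_trans m2m1 m1m.
apply: leq_trans (dlx _ m1x).
by rewrite -(submK m2m1) mdegD leq_addl.
Qed.

Lemma DG_I v : DG d I v.
Proof. by move=> F m; apply: (DG_gen (lew_term v) (HB (lew_term v))). Qed.

Lemma term_mp s v : term_order (fun x y => lew v (mp x s) (mp y s)).
Proof.
case: (lew_term v) => [[rf an tr to] [z0 ad]].
split; [split|split].
- by move=> x; apply: rf.
- by move=> x y H; apply: (@mp_inj _ s); apply: an.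
- by move=> y x z; apply: tr.
- by move=> x y; apply: to.
- by move=> x; rewrite mp0; apply: z0.
- by move=> x y m; rewrite !mpD; apply: ad.
Qed.

Lemma DG_Js s v : DG d (Js s) v.
Proof.
move=> F m JF lF.
pose le' := fun x y => lew v (mp x s) (mp y s).
have lf : lead_mon le' (msym s F) (mp m (s^-1)%g).
  case: lF => mF l; split; first by rewrite msupp_msym mpKV.
  by move=> x; rewrite msupp_msym => /l; rewrite /le' mpKV.
have [F0' [m0' [IF0 lF0 m0m d0]]] := DG_gen (term_mp s v) (HB (term_mp s v)) JF lf.
exists (msym (s^-1)%g F0'), (mp m0' s); split.
- by rewrite /Js msymKV.
- case: lF0 => m0F l; split; first by rewrite msupp_msym mpK.
  move=> y; rewrite msupp_msym => /l; rewrite /le' mpKV //.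
- by rewrite -(mpKV s m); apply: mp_le.
- by rewrite mdeg_mp.
Qed.

Lemma init_to s v h : init_ideal (wact s v) (Js s) h -> init_ideal v I (msym s h).
Proof.
have Hid : is_ideal (fun h => init_ideal v I (msym s h)).
  split.
  - by rewrite msym0; apply: id0; apply: ideal_gen_ideal.
  - by move=> f g; rewrite msymD; apply: idD; apply: ideal_gen_ideal.
  - by move=> f g; rewrite msymM; apply: idM; apply: ideal_gen_ideal.
apply: ideal_gen_min Hid _ h => p [f [Jf ->]].
by rewrite -in_w_msym; apply: ideal_gen_gen; exists (msym s f).
Qed.

Lemma init_from s v p : init_ideal v I p -> init_ideal (wact s v) (Js s) (msym (s^-1)%g p).
Proof.
have Hid : is_ideal (fun p => init_ideal (wact s v) (Js s) (msym (s^-1)%g p)).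
  split.
  - by rewrite msym0; apply: id0; apply: ideal_gen_ideal.
  - by move=> f g; rewrite msymD; apply: idD; apply: ideal_gen_ideal.
  - by move=> f g; rewrite msymM; apply: idM; apply: ideal_gen_ideal.
apply: ideal_gen_min Hid _ p => q [f [If ->]].
apply: ideal_gen_gen; exists (msym (s^-1)%g f); split; first by rewrite /Js msymKV.
by rewrite -{1}(msymKV s f) in_w_msym msymK.
Qed.

Lemma init_equiv s v1 v2 : same_ideal (init_ideal v1 I) (init_ideal v2 I) <->
  same_ideal (init_ideal (wact s v1) (Js s)) (init_ideal (wact s v2) (Js s)).
Proof.
split => H h; split => Hh.
- by rewrite -(msymK s h); apply: init_from; apply/H; apply: init_to.
- by rewrite -(msymK s h); apply: init_from; apply/H; apply: init_to.
- by rewrite -(msymKV s h); apply: init_to; apply/H; apply: init_from.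
- by rewrite -(msymKV s h); apply: init_to; apply/H; apply: init_from.
Qed.

Lemma wactK g v : wact (g^-1)%g (wact g v) = v.
Proof. by apply: functional_extensionality => i; rewrite /wact permKV. Qed.
Lemma wactKV g v : wact g (wact (g^-1)%g v) = v.
Proof. by apply: functional_extensionality => i; rewrite /wact permK. Qed.

Lemma sym_same (A B : poly -> Prop) : same_ideal A B -> same_ideal B A.
Proof. by move=> H h; split => /H. Qed.

Lemma main_Cw g : g \in G -> forall w : 'I_n -> R,
  same_wset (wimage g (Cw I w)) (Cw I (wact g w)).
Proof.
move=> gG w; set s := (g^-1)%g.
have sG : s \in G by rewrite groupV.
have sG' : (s^-1)%g \in G by rewrite invgK.
move=> v; split.
  case=> u [Cu ->]; rewrite /Cw.
  apply/(init_equiv s); rewrite !wactK.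
  move=> h; split => Hh.
  - exact: (core_incl HI (Js_hom s) (TR1 sG) (TR2 sG') (@DG_Js s u) Cu Hh).
  - exact: (core_incl HI (Js_hom s) (TR1 sG) (TR2 sG') (@DG_Js s w) (sym_same Cu) Hh).
move=> Cv; exists (wact s v); split; last by rewrite wactKV.
move: Cv; rewrite /Cw => /(init_equiv s); rewrite wactK => Cv h; split => Hh.
- exact: (core_incl (Js_hom s) HI (TR2 sG') (TR1 sG) (@DG_I _) Cv Hh).
- exact: (core_incl (Js_hom s) HI (TR2 sG') (TR1 sG) (@DG_I _) (sym_same Cv) Hh).
Qed.

End Main.



Section Clos.
Local Open Scope ring_scope.
Variables (n : nat) (R : realType).
Implicit Types (S : ('I_n -> R) -> Prop).

Lemma closure_wimage g S : same_wset (wimage g (closure_Rn S)) (closure_Rn (wimage g S)).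
Proof.
move=> v; split.
  case=> u [cu ->] e e0; have [x [Sx hx]] := cu e e0.
  by exists (wact g x); split; [exists x|move=> i; rewrite /wact; apply: hx].
move=> cv; exists (wact (g^-1)%g v); split; last by rewrite wactKV.
move=> e e0; have [y [[x [Sx ->]] hy]] := cv e e0.
exists x; split => // j; have := hy ((g^-1)%g j).
by rewrite /wact permKV.
Qed.

Lemma closure_same S1 S2 : same_wset S1 S2 -> same_wset (closure_Rn S1) (closure_Rn S2).
Proof.
move=> E v; split => H e e0; have [x [Sx hx]] := H e e0; exists x; split => //; exact/E.
Qed.

Lemma same_trans S1 S2 S3 : same_wset S1 S2 -> same_wset S2 S3 -> same_wset S1 S3.
Proof. by move=> E1 E2 v; rewrite E1 E2. Qed.

End Clos.

Theorem mainTheorem11 (n : nat) (k : fieldType) (R : realType)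
  (G : {group {perm 'I_n}}) (I : {mpoly k[n]} -> Prop) (d : nat) :
  homogeneous_ideal I ->
  (forall le : rel 'X_{1..n}, term_order le ->
     generated_in_deg_le (in_order le I) d) ->
  acts_monomially G I d ->
  forall g, g \in G ->
    (forall w : 'I_n -> R, exists w' : 'I_n -> R,
        same_wset (wimage g (Cw I w)) (Cw I w')) /\
    (forall w : 'I_n -> R, exists w' : 'I_n -> R,
        same_wset (wimage g (gfan_cone I w)) (gfan_cone I w')) /\
    (forall w' : 'I_n -> R, exists w : 'I_n -> R,
        same_wset (wimage g (gfan_cone I w)) (gfan_cone I w')).
Proof.
move=> HI HB HM g gG.
have Hm := main_Cw HI HB HM gG.
have Hc : forall w : 'I_n -> R,
    same_wset (wimage g (gfan_cone I w)) (gfan_cone I (wact g w)).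
  move=> w; apply: same_trans (closure_wimage _ _) _.
  rewrite /gfan_cone; apply: closure_same; exact: Hm.
split; first by move=> w; exists (wact g w); apply: Hm.
split; first by move=> w; exists (wact g w); apply: Hc.
move=> w'; exists (wact (g^-1)%g w'); have := Hc (wact (g^-1)%g w').
by rewrite wactKV.
Qed.
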